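(* Assume Dickson's conjecture. Then there exist infinitely many primes $q$ such that $2q+1$, $6q+1$ and $8q+1$ are all prime, while $iq+1$ is not prime for each $i\in\{10,12,14,16,18\}$.
   Context: Dickson's conjecture: Let $a_1,\dots,a_k$ be integers and $b_1,\dots,b_k$ positive integers. If there is no prime $q$ such that $q$ divides $\prod_{i=1}^k(a_i+b_in)$ for every $n\in\{0,1,\dots,q-1\}$, then there are infinitely many positive integers $n$ for which $a_1+b_1n,\dots,a_k+b_kn$ are all prime. *)

(* Defs.v *)
From mathcomp Require Import all_boot all_order all_algebra.
Set Implicit Arguments. Unset Strict Implicit. Unset Printing Implicit Defensive.
Import GRing.Theory Num.Theory.

Definition int_prime (z : int) : Prop := exists p : nat, prime p /\ z = Posz p.

Definition DicksonConjecture : Prop :=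
  forall (k : nat) (a : 'I_k -> int) (b : 'I_k -> nat),
    (forall i, 0 < b i)%N ->
    (~ exists q : nat, prime q /\
        forall n : nat, (n < q)%N ->
          ((Posz q) %| (\prod_(i < k) (a i + Posz (b i * n)%N))%R)%Z) ->
    forall N : nat, exists n : nat, (N < n)%N /\ (0 < n)%N /\
      forall i, int_prime (a i + Posz (b i * n)%N)%R.

(* Main.v *)
Require Import Defs.
From mathcomp Require Import all_boot all_order all_algebra.
From mathcomp Require Import zify.
Import GRing.Theory.

Lemma small_prod (p : nat) (l : seq nat) : prime p -> (11 < p)%N ->
  all (fun x => (0 < x <= 11)%N) l -> ~~ (p %| \prod_(x <- l) x)%N.
Proof.
move=> pp lt; elim: l => [|x l IH] /=; first by rewrite big_nil Euclid_dvd1.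
move=> /andP [/andP [x0 x11] al]; rewrite big_cons Euclid_dvdM // negb_or IH // andbT.
apply/negP => /(dvdn_leq x0); lia.
Qed.

Lemma uniq_root (p a c n m : nat) : prime p -> (11 < p)%N -> (0 < c <= 8)%N ->
  (n < m < 5)%N -> (p %| a + 2310 * c * n)%N -> (p %| a + 2310 * c * m)%N -> False.
Proof.
move=> pp lt /andP [c0 c8] /andP [nm m5] h1 h2.
have : (p %| (a + 2310 * c * m) - (a + 2310 * c * n))%N by apply: dvdn_sub.
have -> : ((a + 2310 * c * m) - (a + 2310 * c * n) =
   \prod_(x <- [:: 2; 3; 5; 7; 11; c; m - n]) x)%N.
  rewrite !big_cons big_nil. nia.
apply/negP; apply: small_prod => //=. rewrite c0 (leq_trans c8) //= subn_gt0 nm /=. lia.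
Qed.

Ltac pig U0 U1 U2 U3 :=
  match goal with
  | a : ?D ?x, b : ?D ?y |- _ =>
      first [ apply: (U0 x y isT a b) | apply: (U1 x y isT a b)
            | apply: (U2 x y isT a b) | apply: (U3 x y isT a b) ]
  end.

Lemma pigeon (D0 D1 D2 D3 : nat -> Prop) :
  (forall n, (n < 5)%N -> D0 n \/ D1 n \/ D2 n \/ D3 n) ->
  (forall n m, (n < m < 5)%N -> D0 n -> D0 m -> False) ->
  (forall n m, (n < m < 5)%N -> D1 n -> D1 m -> False) ->
  (forall n m, (n < m < 5)%N -> D2 n -> D2 m -> False) ->
  (forall n m, (n < m < 5)%N -> D3 n -> D3 m -> False) -> False.
Proof.
move=> H U0 U1 U2 U3.
have h0 := H 0%N isT; have h1 := H 1%N isT; have h2 := H 2%N isT;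
have h3 := H 3%N isT; have h4 := H 4%N isT; clear H.
case: h0 => [a0|[a0|[a0|a0]]];
case: h1 => [a1|[a1|[a1|a1]]]; try solve [pig U0 U1 U2 U3];
case: h2 => [a2|[a2|[a2|a2]]]; try solve [pig U0 U1 U2 U3];
case: h3 => [a3|[a3|[a3|a3]]]; try solve [pig U0 U1 U2 U3];
case: h4 => [a4|[a4|[a4|a4]]]; pig U0 U1 U2 U3.
Qed.

Lemma int_prime_nat (x : nat) : int_prime (Posz x) -> prime x.
Proof. by case=> p [pp [->]]. Qed.

Lemma notprime_mul (d k x : nat) : (1 < d)%N -> (1 < k)%N -> x = (d * k)%N -> ~~ prime x.
Proof.
move=> d1 k1 ->; apply/negP => px.
have dv : (d %| d * k)%N by apply: dvdn_mulr.
have d1' : d != 1%N by rewrite neq_ltn d1 orbT.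
move/(prime_nt_dvdP px d1'): dv => e.
nia.
Qed.

Theorem lemma6p1 :
  DicksonConjecture ->
  forall N : nat, exists q : nat, (N < q)%N /\ prime q /\
    prime (2 * q + 1) /\ prime (6 * q + 1) /\ prime (8 * q + 1) /\
    (forall i : nat, i \in [:: 10; 12; 14; 16; 18]%N -> ~~ prime (i * q + 1)).
Proof.
move=> D N.
pose a : 'I_4 -> int := fun i => Posz (nth 0%N [:: 641; 1283; 3847; 5129]%N i).
pose b : 'I_4 -> nat := fun i => (2310 * nth 0%N [:: 1; 2; 6; 8]%N i)%N.
have hb : forall i, (0 < b i)%N by case => [[|[|[|[|]]]]].
have adm : ~ exists q : nat, prime q /\
        forall n : nat, (n < q)%N ->
          ((Posz q) %| (\prod_(i < 4) (a i + Posz (b i * n)%N))%R)%Z.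
  case=> p [pp H].
  have H' : forall n, (n < p)%N -> (p %| (641 + 2310*1*n) * (1283 + 2310*2*n) *
       (3847+2310*6*n) * (5129 + 2310*8*n))%N.
    move=> n /H. rewrite !big_ord_recr big_ord0 /= /a /b /= mul1r -!PoszD -!PoszM dvdzE. exact.
  case: (leqP p 11) => hp.
    have := H' 0%N (prime_gt0 pp).
    rewrite !muln0 !addn0 !Euclid_dvdM //.
    move: p pp hp {H H'}.
    by do 12! case => //.
  apply: (@pigeon (fun n => p %| 641 + 2310*1*n)%N (fun n => p %| 1283 + 2310*2*n)%N
     (fun n => p %| 3847 + 2310*6*n)%N (fun n => p %| 5129 + 2310*8*n)%N).
  - move=> n n5; have : (n < p)%N by apply: (leq_trans n5); apply: (leq_trans _ hp).
    move=> /H'; rewrite !Euclid_dvdM // => /orP[/orP[/orP[h|h]|h]|h].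
    + by left. + by right; left. + by right; right; left. + by right; right; right.
  - by move=> n m nm; apply: uniq_root.
  - by move=> n m nm; apply: uniq_root.
  - by move=> n m nm; apply: uniq_root.
  - by move=> n m nm; apply: uniq_root.
have [n [Nn [n0 hp]]] := D 4%N a b hb adm N.
have h0 := hp (@Ordinal 4 0 isT); have h1 := hp (@Ordinal 4 1 isT);
have h2 := hp (@Ordinal 4 2 isT); have h3 := hp (@Ordinal 4 3 isT).
rewrite /a /b /= -PoszD in h0 h1 h2 h3.
move/int_prime_nat: h0 => h0; move/int_prime_nat: h1 => h1.
move/int_prime_nat: h2 => h2; move/int_prime_nat: h3 => h3.
exists (641 + 2310 * n)%N; split; first by clear - Nn; lia.
split; first by rewrite muln1 in h0.
split; first by have -> : (2 * (641 + 2310 * n) + 1 = 1283 + 2310 * 2 * n)%N by clear - n; lia.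
split; first by have -> : (6 * (641 + 2310 * n) + 1 = 3847 + 2310 * 6 * n)%N by clear - n; lia.
split; first by have -> : (8 * (641 + 2310 * n) + 1 = (4000 + 1129) + 2310 * 8 * n)%N by clear - n; lia.
move=> i; rewrite !inE => /orP[/eqP->|/orP[/eqP->|/orP[/eqP->|/orP[/eqP->|/eqP->]]]].
- apply: (@notprime_mul 3 (2137 + 77 * 100 * n)); clear - n; lia.
- apply: (@notprime_mul 7 (1099 + 396 * 10 * n)); clear - n; lia.
- apply: (@notprime_mul 5 (1795 + 66 * 98 * n)); clear - n; lia.
- apply: (@notprime_mul 3 (3419 + 1232 * 10 * n)); clear - n; lia.
- apply: (@notprime_mul 11 (1049 + 378 * 10 * n)); clear - n; lia.
Qed.
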